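(* For every $n\ge1$, the half space $\mathbb R^n_+=\{(x_1,\dots,x_n)\in\mathbb R^n: x_n\ge0\}$ with the Euclidean metric is an absolute extensor in the category $\mathcal A$ and in the category $\tilde{\mathcal A}$.
   Context: A metric space is proper if all closed balls are compact; a map is proper if preimages of compact sets are compact; a map $f:X\to Y$ of metric spaces is asymptotically Lipschitz if there are $\lambda,s\ge0$ with $d_Y(f(x),f(x'))\le\lambda d_X(x,x')+s$ for all $x,x'$. The category $\mathcal A$ has proper metric spaces as objects and continuous proper asymptotically Lipschitz maps as morphisms. The category $\tilde{\mathcal A}$ has the same objects; its morphisms are morphisms $f:X\to Y$ of $\mathcal A$ with nonzero norm, meaning: for base points $x_0\in X$, $y_0\in Y$ there exist $c>0$, $b\ge0$ with $d_Y(f(x),y_0)\ge c\,d_X(x,x_0)-b$ for all $x\in X$ (independent of base points). An object $Y$ is an absolute extensor in such a category if for every object $X$, every closed subset $A\subset X$ with the induced metric, and every morphism $\phi:A\to Y$, there is a morphism $\bar\phi:X\to Y$ with $\bar\phi|_A=\phi$. *)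

(* Defs.v *)
From Stdlib Require Import Reals List.
From mathcomp Require Import ssreflect ssrfun ssrbool eqtype ssrnat seq fintype bigop.

Open Scope R_scope.

Record MSpace := { pt : Type; dist : pt -> pt -> R }.

Arguments dist {_} _ _.

Definition is_metric (X : MSpace) : Prop :=
  (forall x y : pt X, dist x y = 0 <-> x = y) /\
  (forall x y : pt X, dist x y = dist y x) /\
  (forall x y z : pt X, dist x z <= dist x y + dist y z).

Definition open_set {X : MSpace} (U : pt X -> Prop) : Prop :=
  forall x, U x -> exists e, 0 < e /\ forall y, dist x y < e -> U y.

Definition closed_set {X : MSpace} (A : pt X -> Prop) : Prop :=
  open_set (fun x => ~ A x).

Definition compact_set {X : MSpace} (K : pt X -> Prop) : Prop :=
  forall (I : Type) (U : I -> pt X -> Prop),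
    (forall i, open_set (U i)) ->
    (forall x, K x -> exists i, U i x) ->
    exists l : list I, forall x, K x -> exists i, List.In i l /\ U i x.

Definition closed_ball {X : MSpace} (x : pt X) (r : R) : pt X -> Prop :=
  fun y => dist x y <= r.

Definition proper_space (X : MSpace) : Prop :=
  forall (x : pt X) (r : R), compact_set (closed_ball x r).

Definition is_object (X : MSpace) : Prop := is_metric X /\ proper_space X.

Definition continuous_map {X Y : MSpace} (f : pt X -> pt Y) : Prop :=
  forall x e, 0 < e -> exists d, 0 < d /\
    forall y, dist x y < d -> dist (f x) (f y) < e.

Definition proper_map {X Y : MSpace} (f : pt X -> pt Y) : Prop :=
  forall K : pt Y -> Prop, compact_set K -> compact_set (fun x => K (f x)).

Definition asymp_lipschitz {X Y : MSpace} (f : pt X -> pt Y) : Prop :=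
  exists lam s, 0 <= lam /\ 0 <= s /\
    forall x x', dist (f x) (f x') <= lam * dist x x' + s.

Definition morA {X Y : MSpace} (f : pt X -> pt Y) : Prop :=
  continuous_map f /\ proper_map f /\ asymp_lipschitz f.

(* Nonzero norm (stated for all base points, as the property is
   independent of base points) *)
Definition nonzero_norm {X Y : MSpace} (f : pt X -> pt Y) : Prop :=
  forall (x0 : pt X) (y0 : pt Y), exists c b, 0 < c /\ 0 <= b /\
    forall x, dist (f x) y0 >= c * dist x x0 - b.

Definition morAt {X Y : MSpace} (f : pt X -> pt Y) : Prop :=
  morA f /\ nonzero_norm f.

Definition subspace (X : MSpace) (A : pt X -> Prop) : MSpace :=
  {| pt := {x : pt X | A x};
     dist := fun a b => dist (proj1_sig a) (proj1_sig b) |}.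

Definition abs_extensor
  (mor : forall X Y : MSpace, (pt X -> pt Y) -> Prop) (Y : MSpace) : Prop :=
  forall X : MSpace, is_object X ->
  forall A : pt X -> Prop, closed_set A ->
  forall phi : pt (subspace X A) -> pt Y, mor (subspace X A) Y phi ->
  exists psi : pt X -> pt Y, mor X Y psi /\
    forall a : pt (subspace X A), psi (proj1_sig a) = phi a.

Definition AE_A (Y : MSpace) : Prop := abs_extensor (@morA) Y.
Definition AE_At (Y : MSpace) : Prop := abs_extensor (@morAt) Y.

(* Half space R^n_+ = { x in R^n | x_n >= 0 } with the Euclidean metric;
   coordinates indexed by 'I_n, x_n is the coordinate of index n.-1. *)
Definition halfspace_pt (n : nat) : Type :=
  {x : 'I_n -> R | forall i : 'I_n, nat_of_ord i = n.-1 -> 0 <= x i}.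

Definition euclid_dist (n : nat) (x y : halfspace_pt n) : R :=
  sqrt (\big[Rplus/0]_(i < n) Rsqr (proj1_sig x i - proj1_sig y i)).

Definition halfspace (n : nat) : MSpace :=
  {| pt := halfspace_pt n; dist := euclid_dist n |}.

(* Main.v *)
Require Import Defs.
From Stdlib Require Import Reals Lra Lia Psatz ClassicalEpsilon Classical FunctionalExtensionality ProofIrrelevance.
From mathcomp Require Import ssreflect ssrfun ssrbool eqtype ssrnat seq fintype bigop.
Import Defs.
Open Scope R_scope.
Definition Inf {T : Type} (g : T -> R) : R :=
  - epsilon (inhabits 0) (fun l => is_lub (fun r => exists a, r = - g a) l).

Lemma Inf_spec {T : Type} (g : T -> R) (a0 : T) (m : R) (Hm : forall a, m <= g a) :
  (forall a, Inf g <= g a) /\ (forall m', (forall a, m' <= g a) -> m' <= Inf g).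
Proof.
  set E := fun r => exists a, r = - g a.
  have HE : exists l, is_lub E l.
  { destruct (completeness E) as [l Hl].
    - exists (- m). intros r [a ->]. specialize (Hm a). lra.
    - exists (- g a0). by exists a0.
    - by exists l. }
  have := epsilon_spec (inhabits 0) _ HE. rewrite /Inf -/E.
  set l := epsilon _ _. move=> [Hub Hlub]. split.
  - move=> a. have HEa : E (- g a) by exists a. have := Hub _ HEa. lra.
  - move=> m' Hm'. have : l <= - m'.
    { apply Hlub. intros r [a ->]. specialize (Hm' a); lra. }
    lra.
Qed.

Lemma Inf_le {T : Type} (g : T -> R) (a0 : T) m (Hm : forall a, m <= g a) a :
  Inf g <= g a.
Proof. by case: (Inf_spec g a0 m Hm) => H _. Qed.

Lemma Inf_ge {T : Type} (g : T -> R) (a0 : T) m (Hm : forall a, m <= g a) m' :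
  (forall a, m' <= g a) -> m' <= Inf g.
Proof. by case: (Inf_spec g a0 m Hm) => _ H; apply H. Qed.

Lemma Inf_approx {T : Type} (g : T -> R) (a0 : T) m (Hm : forall a, m <= g a) e :
  0 < e -> exists a, g a < Inf g + e.
Proof.
  move=> He. apply NNPP => Hn.
  have : Inf g + e <= Inf g.
  { apply (Inf_ge g a0 m Hm) => a. apply Rnot_lt_le => Hl. apply Hn. by exists a. }
  lra.
Qed.

Lemma le_eps (a b c : R) : 0 < c -> (forall e, 0 < e -> a <= b + e * c) -> a <= b.
Proof.
  move=> Hc H. apply Rnot_lt_le => Hlt.
  have He : 0 < (a - b) / (2 * c).
  { apply Rdiv_lt_0_compat; lra. }
  have := H _ He. have -> : (a - b) / (2 * c) * c = (a - b) / 2 by field; lra.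
  lra.
Qed.

Lemma Inf_scale {T : Type} (g1 g2 : T -> R) (a0 : T) m1 m2
  (Hm1 : forall a, m1 <= g1 a) (Hm2 : forall a, m2 <= g2 a) c1 c2 :
  0 < c1 -> 0 < c2 -> (forall a, g1 a * c1 <= g2 a * c2) ->
  Inf g1 * c1 <= Inf g2 * c2.
Proof.
  move=> H1 H2 H. apply (le_eps _ _ c2 H2) => e He.
  case: (Inf_approx g2 a0 m2 Hm2 e He) => a Ha.
  have := Inf_le g1 a0 m1 Hm1 a. have := H a.
  move=> Ha1 Ha2.
  have : Inf g1 * c1 <= g1 a * c1 by apply Rmult_le_compat_r; lra.
  have : g2 a * c2 <= (Inf g2 + e) * c2 by apply Rmult_le_compat_r; lra.
  nra.
Qed.

Lemma dist_refl (X : MSpace) (HX : is_metric X) (x : pt X) : dist x x = 0.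
Proof. by case: HX => [H _]; apply H. Qed.

Lemma dist_sym (X : MSpace) (HX : is_metric X) (x y : pt X) : dist x y = dist y x.
Proof. by case: HX => [_ [H _]]. Qed.

Lemma dist_tri (X : MSpace) (HX : is_metric X) (x y z : pt X) :
  dist x z <= dist x y + dist y z.
Proof. by case: HX => [_ [_ H]]. Qed.

Lemma dist_ge0 (X : MSpace) (HX : is_metric X) (x y : pt X) : 0 <= dist x y.
Proof.
  have := dist_tri X HX x y x. rewrite dist_refl // (dist_sym X HX y x). lra.
Qed.

Lemma dist_eq0 (X : MSpace) (HX : is_metric X) (x y : pt X) : dist x y = 0 -> x = y.
Proof. by case: HX => [H _]; apply H. Qed.

Lemma Rabs_le_between (a b : R) : Rabs a <= b -> - b <= a <= b.
Proof. unfold Rabs; destruct (Rcase_abs a); lra. Qed.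
Lemma Rabs_lt_between (a b : R) : Rabs a < b -> - b < a < b.
Proof. unfold Rabs; destruct (Rcase_abs a); lra. Qed.
Lemma Rabs_lt_intro (a b : R) : - b < a < b -> Rabs a < b.
Proof. unfold Rabs; destruct (Rcase_abs a); lra. Qed.
Lemma Rabs_ge0' (a : R) : 0 <= Rabs a.
Proof. unfold Rabs; destruct (Rcase_abs a); lra. Qed.
Lemma Rabs_triang' (a b : R) : Rabs (a + b) <= Rabs a + Rabs b.
Proof. unfold Rabs; destruct (Rcase_abs (a+b)), (Rcase_abs a), (Rcase_abs b); lra. Qed.

Lemma divK (d c : R) : 0 < c -> d / c * c = d.
Proof. move=> Hc. field. lra. Qed.
Lemma div_ge0 (d c : R) : 0 < c -> 0 <= d -> 0 <= d / c.
Proof. move=> Hc Hd. unfold Rdiv. apply Rmult_le_pos => //. left. by apply Rinv_0_lt_compat. Qed.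
Lemma div_pos (d c : R) : 0 < c -> 0 < d -> 0 < d / c.
Proof. move=> Hc Hd. unfold Rdiv. apply Rmult_lt_0_compat => //. by apply Rinv_0_lt_compat. Qed.

Lemma key_arith (h u v D Dy r dxa dya : R) : 0 < D -> 0 < Dy -> 0 <= r -> 1 <= h ->
  u * Dy = dya -> v * D = dxa -> 0 <= u -> 0 <= v -> D <= dxa -> Dy <= dya ->
  dya <= r + dxa -> dxa <= r + dya -> D <= Dy + r -> Dy <= D + r ->
  h * u * (D - r) <= h * v * (D + r) /\ h * v * (Dy - r) <= h * u * (Dy + r).
Proof.
  move=> HD HDy Hr Hh Hu Hv Hu0 Hv0 H1 H2 H3 H4 H5 H6.
  have Hv1 : 1 <= v by nra. have Hu1 : 1 <= u by nra.
  have E1 : u * (D - r) <= v * (D + r).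
  { have : u * (D - r) <= u * Dy by apply Rmult_le_compat_l; lra.
    have : r <= v * r by nra.
    lra. }
  have E2 : v * (Dy - r) <= u * (Dy + r).
  { have : v * (Dy - r) <= v * D by apply Rmult_le_compat_l; lra.
    have : r <= u * r by nra.
    lra. }
  split; rewrite !Rmult_assoc; apply Rmult_le_compat_l; lra.
Qed.
Definition rcont {X : MSpace} (g : pt X -> R) : Prop :=
  forall x e, 0 < e -> exists d, 0 < d /\ forall y, dist x y < d -> Rabs (g x - g y) < e.

Definition delta (X : MSpace) (A : pt X -> Prop) (x : pt X) : R :=
  Inf (fun a : {y : pt X | A y} => dist x (proj1_sig a)).


Lemma delta_le (X : MSpace) (HX : is_metric X) (A : pt X -> Prop) (a0 : {y : pt X | A y}) x (a : {y : pt X | A y}) :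
  delta X A x <= dist x (proj1_sig a).
Proof. apply (Inf_le (fun b : {y : pt X | A y} => dist x (proj1_sig b)) a0 0) => b. exact: dist_ge0. Qed.

Lemma delta_ge0 (X : MSpace) (HX : is_metric X) (A : pt X -> Prop) (a0 : {y : pt X | A y}) x :
  0 <= delta X A x.
Proof. apply (Inf_ge (fun b : {y : pt X | A y} => dist x (proj1_sig b)) a0 0) => b; exact: dist_ge0. Qed.

Lemma delta_approx (X : MSpace) (HX : is_metric X) (A : pt X -> Prop) (a0 : {y : pt X | A y}) x e :
  0 < e -> exists a : {y : pt X | A y}, dist x (proj1_sig a) < delta X A x + e.
Proof. apply (Inf_approx (fun b : {y : pt X | A y} => dist x (proj1_sig b)) a0 0) => b; exact: dist_ge0. Qed.

Lemma delta_A (X : MSpace) (HX : is_metric X) (A : pt X -> Prop) (a : {y : pt X | A y}) :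
  delta X A (proj1_sig a) = 0.
Proof.
  apply Rle_antisym; last exact: delta_ge0.
  have := delta_le X HX A a (proj1_sig a) a. by rewrite dist_refl.
Qed.

Lemma delta_lip (X : MSpace) (HX : is_metric X) (A : pt X -> Prop) (a0 : {y : pt X | A y}) x y :
  delta X A x <= delta X A y + dist x y.
Proof.
  have : delta X A x - dist x y <= delta X A y.
  { apply (Inf_ge (fun b : {y : pt X | A y} => dist y (proj1_sig b)) a0 0); first by move=> b; exact: dist_ge0.
    move=> a. have := delta_le X HX A a0 x a. have := dist_tri X HX x y (proj1_sig a). lra. }
  lra.
Qed.

Lemma delta_pos (X : MSpace) (HX : is_metric X) (A : pt X -> Prop) (a0 : {y : pt X | A y}) x :
  closed_set A -> ~ A x -> 0 < delta X A x.
Proof.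
  move=> HA Hx. case: (HA x Hx) => e [He Hb].
  have : e <= delta X A x.
  { apply (Inf_ge (fun b : {y : pt X | A y} => dist x (proj1_sig b)) a0 0); first by move=> b; exact: dist_ge0.
    move=> [a Ha] /=. apply Rnot_lt_le => Hl. exact: (Hb a Hl Ha). }
  lra.
Qed.

Lemma delta_pos_notA (X : MSpace) (HX : is_metric X) (A : pt X -> Prop) (a0 : {y : pt X | A y}) x :
  0 < delta X A x -> ~ A x.
Proof.
  move=> Hp Hx. have := delta_A X HX A (exist _ x Hx). simpl. lra.
Qed.
Definition Lfun (X : MSpace) (A : pt X -> Prop) (f : {y : pt X | A y} -> R) (lam : R) (x : pt X) : R :=
  Inf (fun a : {y : pt X | A y} => f a + lam * dist x (proj1_sig a)).

Lemma L_lb (X : MSpace) (HX : is_metric X) (A : pt X -> Prop) (a0 : {y : pt X | A y})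
  (f : {y : pt X | A y} -> R) lam s (Hlam : 0 <= lam)
  (fl : forall a b, Rabs (f a - f b) <= lam * dist (proj1_sig a) (proj1_sig b) + s) x :
  forall a, f a0 - s - lam * dist x (proj1_sig a0) <= f a + lam * dist x (proj1_sig a).
Proof.
  move=> a. have := fl a0 a. move/Rabs_le_between => [H1 H2].
  have := dist_tri X HX (proj1_sig a0) x (proj1_sig a).
  rewrite (dist_sym X HX (proj1_sig a0) x) => Ht.
  have : lam * dist (proj1_sig a0) (proj1_sig a) <= lam * (dist x (proj1_sig a0) + dist x (proj1_sig a)).
  { apply Rmult_le_compat_l => //. }
  lra.
Qed.

Lemma L_le (X : MSpace) (HX : is_metric X) (A : pt X -> Prop) (a0 : {y : pt X | A y})
  (f : {y : pt X | A y} -> R) lam s (Hlam : 0 <= lam)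
  (fl : forall a b, Rabs (f a - f b) <= lam * dist (proj1_sig a) (proj1_sig b) + s) x a :
  Lfun X A f lam x <= f a + lam * dist x (proj1_sig a).
Proof.
  exact: (Inf_le (fun b : {y : pt X | A y} => f b + lam * dist x (proj1_sig b)) a0 _
    (L_lb X HX A a0 f lam s Hlam fl x)).
Qed.

Lemma L_ge (X : MSpace) (HX : is_metric X) (A : pt X -> Prop) (a0 : {y : pt X | A y})
  (f : {y : pt X | A y} -> R) lam s (Hlam : 0 <= lam)
  (fl : forall a b, Rabs (f a - f b) <= lam * dist (proj1_sig a) (proj1_sig b) + s) x m :
  (forall a, m <= f a + lam * dist x (proj1_sig a)) -> m <= Lfun X A f lam x.
Proof.
  exact: (Inf_ge (fun b : {y : pt X | A y} => f b + lam * dist x (proj1_sig b)) a0 _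
    (L_lb X HX A a0 f lam s Hlam fl x)).
Qed.

Lemma L_lip (X : MSpace) (HX : is_metric X) (A : pt X -> Prop) (a0 : {y : pt X | A y})
  (f : {y : pt X | A y} -> R) lam s (Hlam : 0 <= lam)
  (fl : forall a b, Rabs (f a - f b) <= lam * dist (proj1_sig a) (proj1_sig b) + s) x y :
  Lfun X A f lam x <= Lfun X A f lam y + lam * dist x y.
Proof.
  have : Lfun X A f lam x - lam * dist x y <= Lfun X A f lam y.
  { apply (L_ge X HX A a0 f lam s Hlam fl) => a.
    have := L_le X HX A a0 f lam s Hlam fl x a.
    have := dist_tri X HX x y (proj1_sig a).
    have : lam * dist x (proj1_sig a) <= lam * (dist x y + dist y (proj1_sig a)).
    { apply Rmult_le_compat_l => //; exact: dist_tri. }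
    move=> H1 H2 H3. lra. }
  lra.
Qed.

Lemma L_abs (X : MSpace) (HX : is_metric X) (A : pt X -> Prop) (a0 : {y : pt X | A y})
  (f : {y : pt X | A y} -> R) lam s (Hlam : 0 <= lam)
  (fl : forall a b, Rabs (f a - f b) <= lam * dist (proj1_sig a) (proj1_sig b) + s) x y :
  Rabs (Lfun X A f lam x - Lfun X A f lam y) <= lam * dist x y.
Proof.
  have := L_lip X HX A a0 f lam s Hlam fl x y.
  have := L_lip X HX A a0 f lam s Hlam fl y x.
  rewrite (dist_sym X HX y x) => H1 H2. apply Rabs_le. lra.
Qed.

Lemma L_A (X : MSpace) (HX : is_metric X) (A : pt X -> Prop) (a0 : {y : pt X | A y})
  (f : {y : pt X | A y} -> R) lam s (Hlam : 0 <= lam)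
  (fl : forall a b, Rabs (f a - f b) <= lam * dist (proj1_sig a) (proj1_sig b) + s) a :
  f a - s <= Lfun X A f lam (proj1_sig a) <= f a.
Proof.
  split.
  - apply (L_ge X HX A a0 f lam s Hlam fl) => b.
    have := fl a b. move/Rabs_le_between => [H1 H2]. lra.
  - have := L_le X HX A a0 f lam s Hlam fl (proj1_sig a) a.
    rewrite dist_refl //. lra.
Qed.
Definition hfun (X : MSpace) (A : pt X -> Prop) (f : {y : pt X | A y} -> R) (lam : R)
  (a : {y : pt X | A y}) : R := f a - Lfun X A f lam (proj1_sig a) + 1.

Definition Gfun (X : MSpace) (A : pt X -> Prop) (f : {y : pt X | A y} -> R) (lam : R)
  (x : pt X) : R :=
  match excluded_middle_informative (A x) with
  | left Hx => hfun X A f lam (exist _ x Hx)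
  | right _ => Inf (fun a : {y : pt X | A y} =>
                 hfun X A f lam a * dist x (proj1_sig a) / delta X A x)
  end.

Lemma ext_real (X : MSpace) (HX : is_metric X) (A : pt X -> Prop) (HA : closed_set A)
  (a0 : {y : pt X | A y}) (f : {y : pt X | A y} -> R)
  (fc : forall a e, 0 < e -> exists d, 0 < d /\ forall b : {y : pt X | A y},
          dist (proj1_sig a) (proj1_sig b) < d -> Rabs (f a - f b) < e)
  (lam s : R) (Hlam : 0 <= lam) (Hs : 0 <= s)
  (fl : forall a b, Rabs (f a - f b) <= lam * dist (proj1_sig a) (proj1_sig b) + s) :
  exists F : pt X -> R, rcont F /\ (forall x y, Rabs (F x - F y) <= lam * dist x y + s)
    /\ forall a, F (proj1_sig a) = f a.
Proof.
  pose L := Lfun X A f lam. pose h := hfun X A f lam. pose G := Gfun X A f lam.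
  pose t x a := h a * dist x (proj1_sig a) / delta X A x.
  have hb : forall a, 1 <= h a <= 1 + s.
  { move=> a. have := L_A X HX A a0 f lam s Hlam fl a. rewrite /h /hfun. lra. }
  have hc : forall a e, 0 < e -> exists d, 0 < d /\ forall b,
      dist (proj1_sig a) (proj1_sig b) < d -> Rabs (h a - h b) < e.
  { move=> a e He. case: (fc a (e/2)) => [|d1 [Hd1 H1]]; first lra.
    exists (Rmin d1 (e / (2 * (lam + 1)))). split.
    { apply Rmin_pos => //. apply div_pos; lra. }
    move=> b Hb.
    have Hb1 : dist (proj1_sig a) (proj1_sig b) < d1.
    { have := Rmin_l d1 (e / (2 * (lam + 1))); lra. }
    have Hb2 : dist (proj1_sig a) (proj1_sig b) < e / (2 * (lam + 1)).
    { have := Rmin_r d1 (e / (2 * (lam + 1))); lra. }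
    have H3 := H1 b Hb1.
    have H4 := L_abs X HX A a0 f lam s Hlam fl (proj1_sig a) (proj1_sig b).
    have H5 : lam * dist (proj1_sig a) (proj1_sig b) <= e / 2.
    { have Hd0 := dist_ge0 X HX (proj1_sig a) (proj1_sig b).
      have : (lam + 1) * dist (proj1_sig a) (proj1_sig b) <= (lam+1) * (e / (2 * (lam + 1))).
      { apply Rmult_le_compat_l; lra. }
      have -> : (lam + 1) * (e / (2 * (lam + 1))) = e / 2 by field; lra.
      nra. }
    rewrite /h /hfun.
    apply Rabs_lt_intro. have := Rabs_le_between _ _ H4. have := Rabs_lt_between _ _ H3.
    rewrite /L. lra. }
  have GA : forall a, G (proj1_sig a) = h a.
  { move=> [x Hx] /=. rewrite /G /Gfun. case: excluded_middle_informative => [Hx'|Hn]; last by [].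
    by rewrite (proof_irrelevance _ Hx' Hx). }
  have GN : forall x, ~ A x -> G x = Inf (t x).
  { move=> x Hx. rewrite /G /Gfun. by case: excluded_middle_informative. }
  have tlb : forall x, ~ A x -> forall a, h a <= t x a.
  { move=> x Hx a. have Hd := delta_pos X HX A a0 x HA Hx.
    have Hle := delta_le X HX A a0 x a.
    have -> : t x a = h a * (dist x (proj1_sig a) / delta X A x) by rewrite /t /Rdiv; ring.
    have Hq := divK (dist x (proj1_sig a)) _ Hd.
    set q := dist x (proj1_sig a) / delta X A x in Hq *.
    have : 1 <= q by nra.
    have := hb a. nra. }
  have tlb1 : forall x, ~ A x -> forall a, 1 <= t x a.
  { move=> x Hx a. have := tlb x Hx a. have := hb a. lra. }
  have Gb : forall x, 1 <= G x <= 1 + s.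
  { move=> x. case: (classic (A x)) => Hx.
    - have := GA (exist _ x Hx). simpl => ->. exact: hb.
    - rewrite GN //. split.
      + apply (Inf_ge (t x) a0 1 (tlb1 x Hx)); exact: tlb1.
      + have Hd := delta_pos X HX A a0 x HA Hx.
        apply (le_eps _ _ (1 + s)); first lra. move=> e He.
        case: (delta_approx X HX A a0 x (e * delta X A x)) => [|a Ha]; first nra.
        have := Inf_le (t x) a0 1 (tlb1 x Hx) a.
        have -> : t x a = h a * (dist x (proj1_sig a) / delta X A x) by rewrite /t /Rdiv; ring.
        have Hq := divK (dist x (proj1_sig a)) _ Hd.
        have Hq0 : 0 <= dist x (proj1_sig a) / delta X A x.
        { apply div_ge0 => //; exact: dist_ge0. }
        set q := dist x (proj1_sig a) / delta X A x in Hq Hq0 *.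
        have Hq1 : q < 1 + e by nra.
        have := hb a. nra. }
  have Gco : forall x, ~ A x -> forall e, 0 < e -> exists d, 0 < d /\
      forall y, dist x y < d -> Rabs (G x - G y) < e.
  { move=> x Hx e He. have HD : 0 < delta X A x := delta_pos X HX A a0 x HA Hx.
    set D := delta X A x in HD *.
    exists (Rmin (D/4) (e * D / (8 * (1 + s)))). split.
    { apply Rmin_pos; [lra| apply div_pos; [lra| nra]]. }
    move=> y Hy. have Hr0 : 0 <= dist x y := dist_ge0 X HX x y.
    have Hr1 : dist x y < D / 4.
    { have := Rmin_l (D/4) (e * D / (8 * (1 + s))); lra. }
    have Hr2 : dist x y < e * D / (8 * (1 + s)).
    { have := Rmin_r (D/4) (e * D / (8 * (1 + s))); lra. }
    have Hr3 : dist x y * (8 * (1 + s)) < e * D.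
    { have Hk := divK (e * D) (8 * (1 + s)) ltac:(lra). nra. }
    have HDy1 : D <= delta X A y + dist x y by rewrite /D; exact: delta_lip.
    have HDy2 : delta X A y <= D + dist x y.
    { rewrite /D (dist_sym X HX x y); exact: delta_lip. }
    have HDy : 0 < delta X A y by lra.
    have Hy' : ~ A y := delta_pos_notA X HX A a0 y HDy.
    have key : forall a, t y a * (D - dist x y) <= t x a * (D + dist x y) /\ t x a * (delta X A y - dist x y) <= t y a * (delta X A y + dist x y).
    { move=> a.
      have -> : t y a = h a * (dist y (proj1_sig a) / delta X A y) by rewrite /t /Rdiv; ring.
      have -> : t x a = h a * (dist x (proj1_sig a) / D) by rewrite /t /D /Rdiv; ring.
      have Hu := divK (dist y (proj1_sig a)) _ HDy.
      have Hv := divK (dist x (proj1_sig a)) _ HD.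
      have Hu0 : 0 <= dist y (proj1_sig a) / delta X A y by apply div_ge0 => //; exact: dist_ge0.
      have Hv0 : 0 <= dist x (proj1_sig a) / D by apply div_ge0 => //; exact: dist_ge0.
      have Hdx : D <= dist x (proj1_sig a) := delta_le X HX A a0 x a.
      have Hdy : delta X A y <= dist y (proj1_sig a) := delta_le X HX A a0 y a.
      have T1 : dist y (proj1_sig a) <= dist x y + dist x (proj1_sig a).
      { rewrite (dist_sym X HX x y). exact: dist_tri. }
      have T2 : dist x (proj1_sig a) <= dist x y + dist y (proj1_sig a) by exact: dist_tri.
      exact: (key_arith (h a) _ _ D (delta X A y) (dist x y) _ _ HD HDy Hr0 (proj1 (hb a))
        Hu Hv Hu0 Hv0 Hdx Hdy T1 T2 HDy1 HDy2). }
    have S1 : Inf (t y) * (D - dist x y) <= Inf (t x) * (D + dist x y).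
    { apply (Inf_scale (t y) (t x) a0 1 1 (tlb1 y Hy') (tlb1 x Hx)); try lra.
      move=> a; exact: (proj1 (key a)). }
    have S2 : Inf (t x) * (delta X A y - dist x y) <= Inf (t y) * (delta X A y + dist x y).
    { apply (Inf_scale (t x) (t y) a0 1 1 (tlb1 x Hx) (tlb1 y Hy')); try lra.
      move=> a; exact: (proj2 (key a)). }
    have B1 := Gb x. have B2 := Gb y. rewrite (GN x Hx) in B1. rewrite (GN y Hy') in B2.
    rewrite (GN x Hx) (GN y Hy').
    set gx := Inf (t x) in S1 S2 B1 *. set gy := Inf (t y) in S1 S2 B2 *.
    set Dy := delta X A y in S2 HDy HDy1 HDy2.
    set r := dist x y in Hr0 Hr1 Hr3 S1 S2 HDy1 HDy2.
    apply Rabs_lt_intro. split.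
    - have Q1 : (gy - gx) * (D - r) <= 2 * r * (1 + s) by nra.
      nra.
    - have Q2 : (gx - gy) * (Dy - r) <= 2 * r * (1 + s) by nra.
      nra. }
  have Gci : forall (a : {y : pt X | A y}) e, 0 < e -> exists d, 0 < d /\
      forall y, dist (proj1_sig a) y < d -> Rabs (G (proj1_sig a) - G y) < e.
  { move=> a e He. case: (hc a (e/2)) => [|eta [Heta Hh]]; first lra.
    have Hth : 0 < e / (2 * (2 + s + e)) by apply div_pos; lra.
    have Hth1 : e / (2 * (2 + s + e)) * (2 + s + e) = e / 2 by field; lra.
    set th := e / (2 * (2 + s + e)) in Hth Hth1.
    have Hth2 : th <= 1 by nra.
    have Hrho : 0 < Rmin (eta / 3) (2 * eta / (3 * (1 + s))).
    { apply Rmin_pos; [lra| apply div_pos; lra]. }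
    have Hrho1 : Rmin (eta / 3) (2 * eta / (3 * (1 + s))) <= eta / 3 := Rmin_l _ _.
    have Hrho2 : Rmin (eta / 3) (2 * eta / (3 * (1 + s))) * (3 * (1 + s)) <= 2 * eta.
    { have := Rmin_r (eta / 3) (2 * eta / (3 * (1 + s))).
      have := divK (2 * eta) (3 * (1 + s)) ltac:(lra). nra. }
    set rho := Rmin (eta / 3) (2 * eta / (3 * (1 + s))) in Hrho Hrho1 Hrho2.
    exists rho. split=> // y Hy. rewrite GA.
    case: (classic (A y)) => HAy.
    - have := GA (exist _ y HAy). simpl => ->.
      have := Hh (exist _ y HAy). simpl => H. have := H ltac:(lra).
      move=> H'. apply Rabs_lt_intro; have := Rabs_lt_between _ _ H'; lra.
    - rewrite (GN y HAy).
      have HDy : 0 < delta X A y := delta_pos X HX A a0 y HA HAy.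
      have HDy1 : delta X A y <= dist y (proj1_sig a) := delta_le X HX A a0 y a.
      rewrite (dist_sym X HX y (proj1_sig a)) in HDy1.
      have Hd0 : 0 <= dist (proj1_sig a) y := dist_ge0 X HX _ _.
      have Low : h a - e/2 <= Inf (t y).
      { apply (Inf_ge (t y) a0 1 (tlb1 y HAy)) => b.
        case: (Rlt_or_le (dist (proj1_sig a) (proj1_sig b)) eta) => Hb.
        - have H2 := Hh b Hb. have := tlb y HAy b. have := Rabs_lt_between _ _ H2. lra.
        - have -> : t y b = h b * (dist y (proj1_sig b) / delta X A y) by rewrite /t /Rdiv; ring.
          have Hu := divK (dist y (proj1_sig b)) _ HDy.
          have Hu0 : 0 <= dist y (proj1_sig b) / delta X A y by apply div_ge0 => //; exact: dist_ge0.
          have T := dist_tri X HX (proj1_sig a) y (proj1_sig b).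
          have Hhb := hb b. have Hha := hb a.
          move: (dist y (proj1_sig b) / delta X A y) Hu Hu0 => u Hu Hu0.
          have Hu1 : 1 + s <= u.
          { have : u * rho >= u * delta X A y by apply Rmult_ge_compat_l; lra.
            nra. }
          nra. }
      have Up : Inf (t y) < h a + e.
      { case: (delta_approx X HX A a0 y (th * delta X A y)) => [|b Hb]; first nra.
        have := Inf_le (t y) a0 1 (tlb1 y HAy) b.
        have -> : t y b = h b * (dist y (proj1_sig b) / delta X A y) by rewrite /t /Rdiv; ring.
        have Hu := divK (dist y (proj1_sig b)) _ HDy.
        have Hu0 : 0 <= dist y (proj1_sig b) / delta X A y by apply div_ge0 => //; exact: dist_ge0.
        have T := dist_tri X HX (proj1_sig a) y (proj1_sig b).
        have Hhb := hb b. have Hha := hb a.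
        have Hab : dist (proj1_sig a) (proj1_sig b) < eta.
        { have : th * delta X A y <= delta X A y by nra. lra. }
        have H2 := Hh b Hab. have := Rabs_lt_between _ _ H2.
        move: (dist y (proj1_sig b) / delta X A y) Hu Hu0 => u Hu Hu0.
        have Hu1 : u < 1 + th by nra.
        move=> H3 H4.
        have : h b * u <= h b * (1 + th) by apply Rmult_le_compat_l; lra.
        have : h b * th <= (1 + s) * th by apply Rmult_le_compat_r; lra.
        have : (1 + s) * th <= (2 + s + e) * th by apply Rmult_le_compat_r; lra.
        lra. }
      apply Rabs_lt_intro. lra. }
  exists (fun x => L x + G x - 1). split; [|split].
  - move=> x e He.
    have HG : exists d, 0 < d /\ forall y, dist x y < d -> Rabs (G x - G y) < e / 2.
    { case: (classic (A x)) => Hx.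
      - have := Gci (exist _ x Hx) (e/2) ltac:(lra). simpl. done.
      - apply Gco => //; lra. }
    case: HG => d1 [Hd1 H1].
    exists (Rmin d1 (e / (2 * (lam + 1)))). split.
    { apply Rmin_pos => //. apply div_pos; lra. }
    move=> y Hy.
    have Hb1 : dist x y < d1.
    { have := Rmin_l d1 (e / (2 * (lam + 1))); lra. }
    have Hb2 : dist x y < e / (2 * (lam + 1)).
    { have := Rmin_r d1 (e / (2 * (lam + 1))); lra. }
    have H3 := H1 y Hb1.
    have H4 := L_abs X HX A a0 f lam s Hlam fl x y.
    have H5 : lam * dist x y <= e / 2.
    { have Hd0 := dist_ge0 X HX x y.
      have : (lam + 1) * dist x y <= (lam+1) * (e / (2 * (lam + 1))).
      { apply Rmult_le_compat_l; lra. }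
      have -> : (lam + 1) * (e / (2 * (lam + 1))) = e / 2 by field; lra.
      nra. }
    apply Rabs_lt_intro. have := Rabs_le_between _ _ H4. have := Rabs_lt_between _ _ H3.
    rewrite /L. lra.
  - move=> x y. have H4 := L_abs X HX A a0 f lam s Hlam fl x y.
    have := Gb x. have := Gb y. have := Rabs_le_between _ _ H4.
    move=> H1 H2 H3. apply Rabs_le. rewrite /L. lra.
  - move=> a. rewrite GA /h /hfun /L. ring.
Qed.
Lemma sumR_nil {I : Type} (F : I -> R) : \big[Rplus/0]_(i <- [::]) F i = 0.
Proof. by rewrite big_nil. Qed.
Lemma sumR_cons {I : Type} (F : I -> R) j r :
  \big[Rplus/0]_(i <- j :: r) F i = F j + \big[Rplus/0]_(i <- r) F i.
Proof. by rewrite big_cons. Qed.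

Lemma sumR_ge0 {I : Type} (r : seq I) (F : I -> R) :
  (forall i, 0 <= F i) -> 0 <= \big[Rplus/0]_(i <- r) F i.
Proof.
  move=> H. elim: r => [|j r IH]; rewrite ?sumR_nil ?sumR_cons; first lra.
  have := H j. lra.
Qed.

Lemma sumR_le {I : Type} (r : seq I) (F G : I -> R) :
  (forall i, F i <= G i) -> \big[Rplus/0]_(i <- r) F i <= \big[Rplus/0]_(i <- r) G i.
Proof.
  move=> H. elim: r => [|j r IH]; rewrite ?sumR_nil ?sumR_cons; first lra.
  have := H j. lra.
Qed.

Lemma sumR_const {I : Type} (r : seq I) (c : R) :
  \big[Rplus/0]_(i <- r) c = INR (size r) * c.
Proof.
  elim: r => [|j r IH]; rewrite ?sumR_nil ?sumR_cons; first (simpl; ring).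
  rewrite IH. change (size (j :: r)) with (S (size r)). rewrite S_INR. ring.
Qed.

Lemma sumR_mem {I : eqType} (r : seq I) (F : I -> R) j :
  (forall i, 0 <= F i) -> j \in r -> F j <= \big[Rplus/0]_(i <- r) F i.
Proof.
  move=> H. elim: r => [|k r IH] //. rewrite in_cons sumR_cons => /orP [/eqP ->|Hj].
  - have := sumR_ge0 r F H. lra.
  - have := IH Hj. have := H k. lra.
Qed.

Lemma sumR_plus {I : Type} (r : seq I) (F G : I -> R) :
  \big[Rplus/0]_(i <- r) (F i + G i) = \big[Rplus/0]_(i <- r) F i + \big[Rplus/0]_(i <- r) G i.
Proof.
  elim: r => [|j r IH]; rewrite ?sumR_nil ?sumR_cons; first ring.
  rewrite IH. ring.
Qed.

Lemma sumR_scal {I : Type} (r : seq I) (F : I -> R) c :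
  \big[Rplus/0]_(i <- r) (c * F i) = c * \big[Rplus/0]_(i <- r) F i.
Proof.
  elim: r => [|j r IH]; rewrite ?sumR_nil ?sumR_cons; first ring.
  rewrite IH. ring.
Qed.

Lemma cs_step (p A B a b : R) : 0 <= A -> 0 <= B -> p * p <= A * B ->
  (p + a * b) * (p + a * b) <= (A + a * a) * (B + b * b).
Proof.
  move=> HA HB Hp.
  have HX : 0 <= a * a * B + b * b * A.
  { have := Rle_0_sqr a. have := Rle_0_sqr b. rewrite /Rsqr. nra. }
  have HY : (2 * a * b * p) * (2 * a * b * p) <= (a * a * B + b * b * A) * (a * a * B + b * b * A).
  { have H1 : 0 <= (a * b) * (a * b) * (A * B - p * p).
    { apply Rmult_le_pos; [exact: Rle_0_sqr| lra]. }
    have H2 := Rle_0_sqr (a * a * B - b * b * A). rewrite /Rsqr in H2. nra. }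
  have : 2 * a * b * p <= a * a * B + b * b * A by nra.
  nra.
Qed.

Lemma cauchy_schwarz {I : Type} (r : seq I) (a b : I -> R) :
  let S := \big[Rplus/0]_(i <- r) (a i * b i) in
  S * S <= (\big[Rplus/0]_(i <- r) (a i * a i)) * (\big[Rplus/0]_(i <- r) (b i * b i)).
Proof.
  elim: r => [|j r IH]; rewrite /= ?sumR_nil ?sumR_cons; first lra.
  have HA : 0 <= \big[Rplus/0]_(i <- r) (a i * a i).
  { apply sumR_ge0 => i. exact: Rle_0_sqr. }
  have HB : 0 <= \big[Rplus/0]_(i <- r) (b i * b i).
  { apply sumR_ge0 => i. exact: Rle_0_sqr. }
  have := cs_step _ _ _ (a j) (b j) HA HB IH. lra.
Qed.

Lemma sq_sum_abs {I : Type} (r : seq I) (u : I -> R) :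
  \big[Rplus/0]_(i <- r) (u i * u i) <=
    (\big[Rplus/0]_(i <- r) Rabs (u i)) * (\big[Rplus/0]_(i <- r) Rabs (u i)).
Proof.
  elim: r => [|j r IH]; rewrite ?sumR_nil ?sumR_cons; first lra.
  have HT : 0 <= \big[Rplus/0]_(i <- r) Rabs (u i) by apply sumR_ge0 => i; exact: Rabs_ge0'.
  have Hj : u j * u j = Rabs (u j) * Rabs (u j).
  { rewrite -Rabs_mult Rabs_right //. apply Rle_ge. exact: Rle_0_sqr. }
  have := Rabs_ge0' (u j). nra.
Qed.
Definition crd {n : nat} (p : halfspace_pt n) (i : 'I_n) : R := proj1_sig p i.

Lemma hs_dist_def (n : nat) (x y : pt (halfspace n)) :
  dist x y = sqrt (\big[Rplus/0]_(i < n) ((crd x i - crd y i) * (crd x i - crd y i))).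
Proof. by []. Qed.

Lemma hs_S_ge0 (n : nat) (x y : pt (halfspace n)) :
  0 <= \big[Rplus/0]_(i < n) ((crd x i - crd y i) * (crd x i - crd y i)).
Proof. apply sumR_ge0 => i. exact: Rle_0_sqr. Qed.

Lemma hs_coord_le (n : nat) (x y : pt (halfspace n)) (i : 'I_n) :
  Rabs (crd x i - crd y i) <= dist x y.
Proof.
  rewrite hs_dist_def -sqrt_Rsqr_abs. apply sqrt_le_1_alt.
  apply (sumR_mem _ (fun j => (crd x j - crd y j) * (crd x j - crd y j))).
  - move=> j; exact: Rle_0_sqr.
  - exact: mem_index_enum.
Qed.

Lemma hs_dist_le_sum (n : nat) (x y : pt (halfspace n)) :
  dist x y <= \big[Rplus/0]_(i < n) Rabs (crd x i - crd y i).
Proof.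
  rewrite hs_dist_def.
  have HT : 0 <= \big[Rplus/0]_(i < n) Rabs (crd x i - crd y i).
  { apply sumR_ge0 => i; exact: Rabs_ge0'. }
  rewrite -(sqrt_square _ HT). apply sqrt_le_1_alt.
  exact: (sq_sum_abs _ (fun i => crd x i - crd y i)).
Qed.

Lemma hs_dist_ge0 (n : nat) (x y : pt (halfspace n)) : 0 <= dist x y.
Proof. rewrite hs_dist_def. exact: sqrt_pos. Qed.

Lemma hs_eq (n : nat) (x y : pt (halfspace n)) : (forall i, crd x i = crd y i) -> x = y.
Proof.
  case: x y => [x Hx] [y Hy] /= H. rewrite /crd /= in H.
  have Exy : x = y by apply functional_extensionality.
  subst y. by rewrite (proof_irrelevance _ Hx Hy).
Qed.

Lemma hs_metric (n : nat) : is_metric (halfspace n).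
Proof.
  split; [|split].
  - move=> x y. split.
    + move=> H. apply hs_eq => i.
      have := hs_coord_le n x y i. rewrite H => H'.
      have := Rabs_ge0' (crd x i - crd y i). move: H'. unfold Rabs. destruct Rcase_abs; lra.
    + move=> ->. rewrite hs_dist_def.
      have : \big[Rplus/0]_(i < n) ((crd y i - crd y i) * (crd y i - crd y i)) <= 0.
      { have := sumR_le (index_enum 'I_n) (fun i => (crd y i - crd y i) * (crd y i - crd y i)) (fun _ => 0).
        rewrite sumR_const. move=> H.
        apply (Rle_trans _ (INR (size (index_enum 'I_n)) * 0)); [apply H => i; nra | lra]. }
      move=> H. have := hs_S_ge0 n y y. move=> H2.
      have -> : \big[Rplus/0]_(i < n) ((crd y i - crd y i) * (crd y i - crd y i)) = 0 by lra.
      exact: sqrt_0.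
  - move=> x y. rewrite !hs_dist_def. f_equal.
    apply eq_bigr => i _. ring.
  - move=> x y z. rewrite !hs_dist_def.
    set a := fun i => crd x i - crd y i. set b := fun i => crd y i - crd z i.
    have E : \big[Rplus/0]_(i < n) ((crd x i - crd z i) * (crd x i - crd z i)) =
      \big[Rplus/0]_(i < n) (a i * a i) + 2 * \big[Rplus/0]_(i < n) (a i * b i) + \big[Rplus/0]_(i < n) (b i * b i).
    { rewrite -sumR_scal -!sumR_plus. apply eq_bigr => i _. rewrite /a /b. ring. }
    rewrite E.
    have HA : 0 <= \big[Rplus/0]_(i < n) (a i * a i) by apply sumR_ge0 => i; exact: Rle_0_sqr.
    have HB : 0 <= \big[Rplus/0]_(i < n) (b i * b i) by apply sumR_ge0 => i; exact: Rle_0_sqr.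
    have CS := cauchy_schwarz (index_enum 'I_n) a b. simpl in CS.
    set A := \big[Rplus/0]_(i < n) (a i * a i) in HA CS *.
    set B := \big[Rplus/0]_(i < n) (b i * b i) in HB CS *.
    set P := \big[Rplus/0]_(i < n) (a i * b i) in CS *.
    have HsA := sqrt_sqrt A HA. have HsB := sqrt_sqrt B HB.
    have HsA0 := sqrt_pos A. have HsB0 := sqrt_pos B.
    have HP : P <= sqrt A * sqrt B.
    { apply Rnot_lt_le => Hlt.
      have : sqrt A * sqrt B * (sqrt A * sqrt B) < P * P.
      { have := Rmult_le_pos _ _ HsA0 HsB0. nra. }
      nra. }
    rewrite -(sqrt_square (sqrt A + sqrt B)); last lra.
    apply sqrt_le_1_alt. nra.
Qed.
Lemma nat_above (A : R) : exists m : nat, A < INR m.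
Proof. case: (INR_archimed 1 A) => [|m Hm]; [lra|exists m; lra]. Qed.

Lemma list_max_nat (l : list nat) : exists N, forall m, List.In m l -> (m <= N)%coq_nat.
Proof.
  elim: l => [|a l [N HN]]; first by exists O.
  exists (Nat.max a N) => m [->|Hm]; first lia.
  have := HN m Hm. lia.
Qed.

Lemma open_ball_open (X : MSpace) (HX : is_metric X) (x0 : pt X) (r : R) :
  open_set (fun y => dist x0 y < r).
Proof.
  move=> y Hy. exists (r - dist x0 y). split; first lra.
  move=> z Hz. have := dist_tri X HX x0 y z. lra.
Qed.

Lemma compact_bounded (X : MSpace) (HX : is_metric X) (K : pt X -> Prop) (x0 : pt X) :
  compact_set K -> exists M, forall x, K x -> dist x0 x <= M.
Proof.
  move=> HK.
  case: (HK nat (fun m y => dist x0 y < INR m)).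
  - move=> m. exact: open_ball_open.
  - move=> x _. exact: nat_above.
  - move=> l Hl. case: (list_max_nat l) => N HN. exists (INR N) => x Kx.
    case: (Hl x Kx) => m [Hm Hx]. have := le_INR _ _ (HN m Hm). lra.
Qed.

Lemma compact_closed (X : MSpace) (HX : is_metric X) (K : pt X -> Prop) :
  compact_set K -> closed_set K.
Proof.
  move=> HK y Hy.
  case: (HK nat (fun m z => / (INR m + 1) < dist z y)).
  - move=> m z Hz. exists (dist z y - / (INR m + 1)). split; first lra.
    move=> w Hw. have := dist_tri X HX z w y. lra.
  - move=> z Kz. have Hzy : 0 < dist z y.
    { have := dist_ge0 X HX z y. case=> // H. exfalso. apply Hy.
      have := dist_eq0 X HX z y (esym H). by move=> <-. }
    case: (nat_above (/ dist z y)) => m Hm. exists m.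
    have Hm1 : / dist z y < INR m + 1 by lra.
    have H0 : 0 < / dist z y by apply Rinv_0_lt_compat.
    have := pos_INR m => Hpm.
    have := Rinv_lt_contravar _ _ (Rmult_lt_0_compat (/ dist z y) (INR m + 1) H0 ltac:(lra)) Hm1.
    by rewrite Rinv_inv.
  - move=> l Hl. case: (list_max_nat l) => N HN.
    exists (/ (INR N + 1)). split.
    { apply Rinv_0_lt_compat. have := pos_INR N. lra. }
    move=> w Hw Kw. case: (Hl w Kw) => m [Hm Hwm].
    have HmN := le_INR _ _ (HN m Hm).
    have : / (INR N + 1) <= / (INR m + 1).
    { apply Rinv_le_contravar => //. have := pos_INR m. lra. lra. }
    rewrite (dist_sym X HX y w) in Hw. lra.
Qed.

Fixpoint somes {I : Type} (l : list (option I)) : list I :=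
  match l with
  | nil => nil
  | Some i :: l' => i :: somes l'
  | None :: l' => somes l'
  end.

Lemma in_somes {I : Type} (l : list (option I)) (i : I) : List.In (Some i) l -> List.In i (somes l).
Proof.
  elim: l => [|[j|] l IH] //=.
  - case=> [[->]|H]; [by left| right; exact: IH].
  - case=> [//|H]; exact: IH.
Qed.

Lemma closed_sub_compact (X : MSpace) (K S : pt X -> Prop) :
  compact_set K -> (forall x, S x -> K x) -> closed_set S -> compact_set S.
Proof.
  move=> HK HSK HS I U HU Hcov.
  case: (HK (option I) (fun o x => match o with Some i => U i x | None => ~ S x end)).
  - case=> [i|]; [exact: (HU i) | exact: HS].
  - move=> x Kx. case: (classic (S x)) => Sx.
    + case: (Hcov x Sx) => i Hi. by exists (Some i).
    + by exists None.
  - move=> l Hl. exists (somes l) => x Sx.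
    case: (Hl x (HSK x Sx)) => [[i|] [Hin Hx]] //.
    exists i. split => //. exact: in_somes.
Qed.

Lemma proper_bounded_compact (X : MSpace) (HP : proper_space X) (S : pt X -> Prop) (x0 : pt X) (M : R) :
  closed_set S -> (forall x, S x -> dist x0 x <= M) -> compact_set S.
Proof.
  move=> HS HB. apply (closed_sub_compact X (closed_ball x0 M)) => //.
Qed.

Lemma preimage_closed (X Y : MSpace) (f : pt X -> pt Y) (K : pt Y -> Prop) :
  continuous_map f -> closed_set K -> closed_set (fun x => K (f x)).
Proof.
  move=> Hf HK x Hx. case: (HK (f x) Hx) => e [He Hb].
  case: (Hf x e He) => d [Hd Hd']. exists d. split => // y Hy. exact: Hb (Hd' y Hy).
Qed.

Lemma proper_of_coercive (X Y : MSpace) (HX : is_metric X) (HPX : proper_space X)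
  (HY : is_metric Y) (f : pt X -> pt Y) (x0 : pt X) (y0 : pt Y) :
  continuous_map f ->
  (forall M, exists Rr, forall x, dist y0 (f x) <= M -> dist x0 x <= Rr) ->
  proper_map f.
Proof.
  move=> Hc Hco K HK.
  case: (compact_bounded Y HY K y0 HK) => M HM.
  case: (Hco M) => Rr HR.
  apply (proper_bounded_compact X HPX _ x0 Rr).
  - apply preimage_closed => //. exact: compact_closed.
  - move=> x Kx. apply HR. exact: HM.
Qed.
Definition inbox (n : nat) (b : ('I_n -> R) * ('I_n -> R)) (p : pt (halfspace n)) : Prop :=
  forall i, b.1 i <= crd p i <= b.2 i.

Definition bad (n : nat) (I : Type) (U : I -> pt (halfspace n) -> Prop)
  (b : ('I_n -> R) * ('I_n -> R)) : Prop :=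
  ~ exists lst : list I, forall p, inbox n b p -> exists i, List.In i lst /\ U i p.

Definition upd (n : nat) (g : 'I_n -> R) (k : 'I_n) (v : R) : 'I_n -> R :=
  fun i => if i == k then v else g i.

Definition step (n : nat) (I : Type) (U : I -> pt (halfspace n) -> Prop)
  (b : ('I_n -> R) * ('I_n -> R)) (k : 'I_n) : ('I_n -> R) * ('I_n -> R) :=
  let m := (b.1 k + b.2 k) / 2 in
  if excluded_middle_informative (bad n I U (b.1, upd n b.2 k m))
  then (b.1, upd n b.2 k m) else (upd n b.1 k m, b.2).

Definition wfb (n : nat) (b : ('I_n -> R) * ('I_n -> R)) : Prop := forall i, b.1 i <= b.2 i.

Lemma step_props (n : nat) (I : Type) (U : I -> pt (halfspace n) -> Prop) b k :
  wfb n b -> bad n I U b ->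
  let b' := step n I U b k in
  wfb n b' /\ bad n I U b' /\ (forall i, b.1 i <= b'.1 i /\ b'.2 i <= b.2 i) /\
  (b'.2 k - b'.1 k = (b.2 k - b.1 k) / 2) /\
  (forall i, i != k -> b'.2 i - b'.1 i = b.2 i - b.1 i).
Proof.
  move=> Hwf Hbad /=. rewrite /step.
  case: excluded_middle_informative => Hl /=.
  - split; [|split; [done|split; [|split]]].
    + move=> i /=. rewrite /upd. case: (i =P k) => [->|_]; have := Hwf k; have := Hwf i; lra.
    + move=> i. rewrite /upd. case: (i =P k) => [->|_]; have := Hwf k; lra.
    + rewrite /upd eqxx. field.
    + move=> i Hi. by rewrite /upd (negbTE Hi).
  - split; [|split; [|split; [|split]]].
    + move=> i /=. rewrite /upd. case: (i =P k) => [->|_]; have := Hwf k; have := Hwf i; lra.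
    + move=> [lst2 Hlst2]. apply Hl => [[lst1 Hlst1]]. apply Hbad.
      exists (lst1 ++ lst2) => p Hp.
      case: (Rle_lt_dec (crd p k) ((b.1 k + b.2 k) / 2)) => Hpk.
      * case: (Hlst1 p) => [i /=|j [Hj Uj]].
        { rewrite /upd. case: (i =P k) => [->|_]; have := Hp k; have := Hp i; simpl; lra. }
        exists j. split => //. apply List.in_or_app. by left.
      * case: (Hlst2 p) => [i /=|j [Hj Uj]].
        { rewrite /upd. case: (i =P k) => [->|_]; have := Hp k; have := Hp i; simpl; lra. }
        exists j. split => //. apply List.in_or_app. by right.
    + move=> i. rewrite /upd. case: (i =P k) => [->|_]; have := Hwf k; lra.
    + rewrite /upd eqxx. field.
    + move=> i Hi. by rewrite /upd (negbTE Hi).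
Qed.

Lemma fold_props (n : nat) (I : Type) (U : I -> pt (halfspace n) -> Prop) (r : seq 'I_n) :
  forall b, wfb n b -> bad n I U b ->
  let b' := foldl (step n I U) b r in
  wfb n b' /\ bad n I U b' /\ (forall i, b.1 i <= b'.1 i /\ b'.2 i <= b.2 i) /\
  (forall i, b'.2 i - b'.1 i <= b.2 i - b.1 i) /\
  (forall i, i \in r -> b'.2 i - b'.1 i <= (b.2 i - b.1 i) / 2).
Proof.
  elim: r => [|k r IH] b Hwf Hbad /=.
  - split; [done|split; [done|split; [|split]]].
    + move=> i; lra.
    + move=> i; lra.
    + done.
  - have [H1 [H2 [H3 [H4 H5]]]] := step_props n I U b k Hwf Hbad.
    have [G1 [G2 [G3 [G4 G5]]]] := IH _ H1 H2.
    split; [done|split; [done|split; [|split]]].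
    + move=> i. have := H3 i. have := G3 i. lra.
    + move=> i. have := G4 i. case: (eqVneq i k) => [->|Hik].
      * have := Hwf k. lra.
      * rewrite (H5 i Hik). lra.
    + move=> i. rewrite in_cons. case: (eqVneq i k) => [->|Hik] /=.
      * move=> _. have := G4 k. lra.
      * move=> Hir. have := G5 i Hir. rewrite (H5 i Hik). lra.
Qed.
Definition sstep (n : nat) (I : Type) (U : I -> pt (halfspace n) -> Prop) b :=
  foldl (step n I U) b (enum 'I_n).

Fixpoint seqB (n : nat) (I : Type) (U : I -> pt (halfspace n) -> Prop) b0 (j : nat) :=
  match j with O => b0 | S j' => sstep n I U (seqB n I U b0 j') end.

Lemma seq_props (n : nat) (I : Type) (U : I -> pt (halfspace n) -> Prop) b0 :
  wfb n b0 -> bad n I U b0 -> forall j,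
  let B := seqB n I U b0 in
  wfb n (B j) /\ bad n I U (B j) /\
  (forall i, (B j).1 i <= (B (S j)).1 i /\ (B (S j)).2 i <= (B j).2 i) /\
  (forall i, (B j).2 i - (B j).1 i <= (b0.2 i - b0.1 i) / 2 ^ j).
Proof.
  move=> Hwf Hbad. elim=> [|j IH] /=.
  - have [G1 [G2 [G3 _]]] := fold_props n I U (enum 'I_n) b0 Hwf Hbad.
    split; [done|split; [done|split]].
    + exact: G3.
    + move=> i. lra.
  - move: IH => /= [H1 [H2 [H3 H4]]].
    have [G1 [G2 [G3 [G4 G5]]]] := fold_props n I U (enum 'I_n) _ H1 H2.
    have [K1 [K2 [K3 _]]] := fold_props n I U (enum 'I_n) _ G1 G2.
    split; [done|split; [done|split]].
    + exact: K3.
    + move=> i. have := G5 i (mem_enum _ i). have := H4 i.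
      rewrite /sstep. move=> Ha Hb.
      have Hp : 0 < 2 ^ j by apply pow_lt; lra.
      have -> : (b0.2 i - b0.1 i) / (2 * 2 ^ j) = (b0.2 i - b0.1 i) / 2 ^ j / 2 by field; lra.
      lra.
Qed.

Lemma seq_mono (n : nat) (I : Type) (U : I -> pt (halfspace n) -> Prop) b0 :
  wfb n b0 -> bad n I U b0 -> forall j k, (j <= k)%coq_nat ->
  forall i, (seqB n I U b0 j).1 i <= (seqB n I U b0 k).1 i /\
            (seqB n I U b0 k).2 i <= (seqB n I U b0 j).2 i.
Proof.
  move=> Hwf Hbad j k Hjk i. elim: Hjk => [|k' Hk' [IH1 IH2]]; first lra.
  have [_ [_ [H _]]] := seq_props n I U b0 Hwf Hbad k'.
  have := H i. simpl. lra.
Qed.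

Lemma seq_lu (n : nat) (I : Type) (U : I -> pt (halfspace n) -> Prop) b0 :
  wfb n b0 -> bad n I U b0 -> forall j k i,
  (seqB n I U b0 j).1 i <= (seqB n I U b0 k).2 i.
Proof.
  move=> Hwf Hbad j k i.
  have [H1 _] := seq_mono n I U b0 Hwf Hbad j (Nat.max j k) ltac:(lia) i.
  have [_ H2] := seq_mono n I U b0 Hwf Hbad k (Nat.max j k) ltac:(lia) i.
  have [H3 _] := seq_props n I U b0 Hwf Hbad (Nat.max j k).
  have := H3 i. lra.
Qed.

Lemma pow2_small (W e : R) : 0 <= W -> 0 < e -> exists j : nat, W / 2 ^ j < e.
Proof.
  move=> HW He. case: (nat_above (W / e)) => j Hj. exists j.
  have Hp : 0 < 2 ^ j by apply pow_lt; lra.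
  have Hjp : INR j <= 2 ^ j.
  { elim: j {Hj Hp} => [|j IH]; first (simpl; lra).
    rewrite S_INR /=. have : 1 <= 2 ^ j by apply pow_R1_Rle; lra. lra. }
  have : W < e * 2 ^ j.
  { have := divK W e He. have : W / e < 2 ^ j by lra. nra. }
  move=> H. apply (Rmult_lt_reg_r (2 ^ j)) => //. rewrite divK //.
Qed.

Lemma box_compact (n : nat) b0 : wfb n b0 -> compact_set (inbox n b0).
Proof.
  move=> Hwf I U HU Hcov. apply NNPP => Hbad0.
  have Hbad : bad n I U b0 by [].
  pose pv := fun i => - Inf (fun j : nat => - (seqB n I U b0 j).1 i).
  have Hlb : forall i j, - b0.2 i <= - (seqB n I U b0 j).1 i.
  { move=> i j. have := seq_lu n I U b0 Hwf Hbad j 0 i. simpl. lra. }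
  have Hpl : forall i j, (seqB n I U b0 j).1 i <= pv i.
  { move=> i j. rewrite /pv. have := Inf_le (fun j => - (seqB n I U b0 j).1 i) O _ (Hlb i) j. lra. }
  have Hpu : forall i k, pv i <= (seqB n I U b0 k).2 i.
  { move=> i k. rewrite /pv.
    have : - (seqB n I U b0 k).2 i <= Inf (fun j => - (seqB n I U b0 j).1 i).
    { apply (Inf_ge _ O _ (Hlb i)) => j. have := seq_lu n I U b0 Hwf Hbad j k i. lra. }
    lra. }
  have Hw : forall j i, (seqB n I U b0 j).2 i - (seqB n I U b0 j).1 i <= (b0.2 i - b0.1 i) / 2 ^ j.
  { move=> j i. have [_ [_ [_ H]]] := seq_props n I U b0 Hwf Hbad j. exact: H. }
  have Hbj : forall j, bad n I U (seqB n I U b0 j).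
  { move=> j. by have [_ [H _]] := seq_props n I U b0 Hwf Hbad j. }
  have Hwf0 : forall i, 0 <= b0.2 i - b0.1 i by move=> i; have := Hwf i; lra.
  have Hpv : forall i : 'I_n, nat_of_ord i = n.-1 -> 0 <= pv i.
  { move=> i Hi. apply Rnot_lt_le => Hneg.
    case: (pow2_small (b0.2 i - b0.1 i) (- pv i) (Hwf0 i)) => [|j Hj]; first lra.
    have : exists q, inbox n (seqB n I U b0 j) q.
    { apply NNPP => Hn. apply (Hbj j). exists nil => q Hq. exfalso. apply Hn. by exists q. }
    case=> q Hq. have Hq0 : 0 <= crd q i by exact: (proj2_sig q i Hi).
    have := Hq i. have := Hw j i. have := Hpl i j. lra. }
  pose P : pt (halfspace n) := exist _ pv Hpv.
  have HP : inbox n b0 P.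
  { move=> i. have := Hpl i O. have := Hpu i O. rewrite /crd /=. done. }
  case: (Hcov P HP) => i0 Hi0.
  case: (HU i0 P Hi0) => e [He Hball].
  have HW : 0 <= \big[Rplus/0]_(i < n) (b0.2 i - b0.1 i) by apply sumR_ge0.
  case: (pow2_small _ e HW He) => j Hj.
  apply (Hbj j). exists [:: i0] => q Hq. exists i0. split; first by left.
  apply Hball.
  apply (Rle_lt_trans _ _ _ (hs_dist_le_sum n P q)).
  apply (Rle_lt_trans _ (\big[Rplus/0]_(i < n) ((b0.2 i - b0.1 i) / 2 ^ j))).
  - apply sumR_le => i. have := Hq i. have := Hpl i j. have := Hpu i j. have := Hw j i.
    rewrite /crd /=. move=> H1 H2 H3 H4. apply Rabs_le. lra.
  - have Hp : 0 < 2 ^ j by apply pow_lt; lra.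
    have -> : \big[Rplus/0]_(i < n) ((b0.2 i - b0.1 i) / 2 ^ j) =
              / 2 ^ j * \big[Rplus/0]_(i < n) (b0.2 i - b0.1 i).
    { rewrite -sumR_scal. apply eq_bigr => i _. rewrite /Rdiv. ring. }
    move: Hj. rewrite /Rdiv. lra.
Qed.
Lemma closed_ball_closed (X : MSpace) (HX : is_metric X) (c : pt X) (r : R) :
  closed_set (closed_ball c r).
Proof.
  move=> y Hy. rewrite /closed_ball in Hy. exists (dist c y - r). split; first lra.
  move=> z Hz Hcz. rewrite /closed_ball in Hcz. have := dist_tri X HX c z y.
  rewrite (dist_sym X HX z y). lra.
Qed.

Lemma hs_proper (n : nat) : proper_space (halfspace n).
Proof.
  move=> c r. case: (Rlt_or_le r 0) => Hr.
  - move=> I U _ _. exists nil => x Hx. exfalso. rewrite /closed_ball in Hx.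
    have := hs_dist_ge0 n c x. lra.
  - apply (closed_sub_compact _ (inbox n (fun i => crd c i - r, fun i => crd c i + r))).
    + apply box_compact => i /=. lra.
    + move=> x Hx i /=. have := hs_coord_le n c x i. rewrite /closed_ball in Hx.
      move=> H. have := Rabs_le_between _ _ (Rle_trans _ _ _ H Hx). lra.
    + apply closed_ball_closed. exact: hs_metric.
Qed.

Lemma hs_object (n : nat) : is_object (halfspace n).
Proof. split; [exact: hs_metric | exact: hs_proper]. Qed.
Definition Kn (n : nat) : R := \big[Rplus/0]_(i < n) 1.

Lemma Kn_ge0 (n : nat) : 0 <= Kn n.
Proof. apply sumR_ge0 => _; lra. Qed.

Lemma sum_const_Kn (n : nat) (c : R) : \big[Rplus/0]_(i < n) c = Kn n * c.
Proof.
  rewrite /Kn Rmult_comm -sumR_scal. apply eq_bigr => i _. ring.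
Qed.

Lemma sum_cont (n : nat) (X : MSpace) (HX : is_metric X) (r : seq 'I_n)
  (g : 'I_n -> pt X -> R) :
  (forall i, rcont (g i)) -> forall x e, 0 < e -> exists d, 0 < d /\
    forall y, dist x y < d -> \big[Rplus/0]_(i <- r) Rabs (g i x - g i y) < e.
Proof.
  move=> Hg x. elim: r => [|k r IH] e He.
  - exists 1. split; first lra. move=> y _. rewrite sumR_nil. lra.
  - case: (IH (e/2)) => [|d1 [Hd1 H1]]; first lra.
    case: (Hg k x (e/2)) => [|d2 [Hd2 H2]]; first lra.
    exists (Rmin d1 d2). split; first by apply Rmin_pos.
    move=> y Hy. rewrite sumR_cons.
    have := H1 y (Rlt_le_trans _ _ _ Hy (Rmin_l _ _)).
    have := H2 y (Rlt_le_trans _ _ _ Hy (Rmin_r _ _)). lra.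
Qed.

Lemma vec_cont (n : nat) (X : MSpace) (HX : is_metric X) (psi : pt X -> pt (halfspace n))
  (g : 'I_n -> pt X -> R) :
  (forall x i, crd (psi x) i = g i x) -> (forall i, rcont (g i)) -> continuous_map psi.
Proof.
  move=> Hpsi Hg x e He.
  case: (sum_cont n X HX (index_enum 'I_n) g Hg x e He) => d [Hd H].
  exists d. split => // y Hy.
  apply (Rle_lt_trans _ _ _ (hs_dist_le_sum n (psi x) (psi y))).
  have := H y Hy. have E : \big[Rplus/0]_(i < n) Rabs (crd (psi x) i - crd (psi y) i) =
                             \big[Rplus/0]_(i < n) Rabs (g i x - g i y).
  { apply eq_bigr => i _. by rewrite !Hpsi. }
  rewrite E. done.
Qed.

Lemma vec_lip (n : nat) (X : MSpace) (psi : pt X -> pt (halfspace n))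
  (g : 'I_n -> pt X -> R) (C D : R) :
  (forall x i, crd (psi x) i = g i x) ->
  (forall i x y, Rabs (g i x - g i y) <= C * dist x y + D) ->
  forall x y, dist (psi x) (psi y) <= Kn n * (C * dist x y + D).
Proof.
  move=> Hpsi Hg x y.
  apply (Rle_trans _ _ _ (hs_dist_le_sum n (psi x) (psi y))).
  rewrite -sum_const_Kn. apply sumR_le => i. rewrite !Hpsi. exact: Hg.
Qed.

Definition origin (n : nat) : pt (halfspace n) :=
  exist (fun x : 'I_n -> R => forall i : 'I_n, nat_of_ord i = n.-1 -> 0 <= x i)
    (fun _ => 0) (fun _ _ => Rle_refl 0).

Lemma origin_coord (n : nat) (x : pt (halfspace n)) i : Rabs (crd x i) <= dist (origin n) x.
Proof.
  have := hs_coord_le n (origin n) x i. rewrite /crd /=.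
  have -> : 0 - proj1_sig x i = - proj1_sig x i by ring.
  by rewrite Rabs_Ropp.
Qed.

Lemma Rmax0_lip (a b : R) : Rabs (Rmax a 0 - Rmax b 0) <= Rabs (a - b).
Proof.
  unfold Rmax. destruct (Rle_dec a 0), (Rle_dec b 0); unfold Rabs;
  repeat destruct Rcase_abs; lra.
Qed.
Lemma sub_metric (X : MSpace) (HX : is_metric X) (A : pt X -> Prop) : is_metric (subspace X A).
Proof.
  split; [|split].
  - move=> [x Hx] [y Hy] /=. split.
    + move=> H. have E := dist_eq0 X HX x y H. subst y. by rewrite (proof_irrelevance _ Hx Hy).
    + case=> ->. exact: dist_refl.
  - move=> [x Hx] [y Hy] /=. exact: dist_sym.
  - move=> [x Hx] [y Hy] [z Hz] /=. exact: dist_tri.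
Qed.

Lemma last_idx (n : nat) (hn : (1 <= n)%N) : exists il : 'I_n, nat_of_ord il = n.-1.
Proof.
  have H : (n.-1 < n)%N by rewrite ltn_predL.
  by exists (Ordinal H).
Qed.

Lemma ext_main (n : nat) (hn : (1 <= n)%N) (X : MSpace) (HXo : is_object X)
  (A : pt X -> Prop) (HA : closed_set A)
  (phi : pt (subspace X A) -> pt (halfspace n)) (Hphi : morA phi) (a0 : {y : pt X | A y}) :
  exists psi : pt X -> pt (halfspace n), morA psi /\ (forall a, psi (proj1_sig a) = phi a) /\
    (nonzero_norm phi -> nonzero_norm psi).
Proof.
  case: HXo => HX HPX.
  case: Hphi => [Hc [Hp [lam [s [Hlam [Hs Hl]]]]]].
  have HY := hs_metric n.
  pose f i (a : {y : pt X | A y}) := crd (phi a) i.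
  have Hex : forall i : 'I_n, exists F : pt X -> R, rcont F /\
      (forall x y, Rabs (F x - F y) <= lam * dist x y + s) /\ forall a, F (proj1_sig a) = f i a.
  { move=> i. apply (ext_real X HX A HA a0 (f i)) => //.
    - move=> a e He. case: (Hc a e He) => d [Hd H]. exists d. split => // b Hb.
      apply (Rle_lt_trans _ _ _ (hs_coord_le n (phi a) (phi b) i)). exact: H.
    - move=> a b. apply (Rle_trans _ _ _ (hs_coord_le n (phi a) (phi b) i)). exact: Hl. }
  pose F i := proj1_sig (constructive_indefinite_description _ (Hex i)).
  have HF : forall i, rcont (F i) /\ (forall x y, Rabs (F i x - F i y) <= lam * dist x y + s) /\
      forall a, F i (proj1_sig a) = f i a.
  { move=> i. exact: (proj2_sig (constructive_indefinite_description _ (Hex i))). }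
  pose v x (i : 'I_n) := if nat_of_ord i == n.-1 then Rmax (F i x) 0 + delta X A x else F i x.
  have Hv : forall x (i : 'I_n), nat_of_ord i = n.-1 -> 0 <= v x i.
  { move=> x i Hi. rewrite /v Hi eqxx. have := Rmax_r (F i x) 0.
    have := delta_ge0 X HX A a0 x. lra. }
  pose psi x : pt (halfspace n) :=
    exist (fun w : 'I_n -> R => forall i : 'I_n, nat_of_ord i = n.-1 -> 0 <= w i) (v x) (Hv x).
  have Hpsi : forall x i, crd (psi x) i = v x i by [].
  have Hdl : forall x y, Rabs (delta X A x - delta X A y) <= dist x y.
  { move=> x y. have := delta_lip X HX A a0 x y. have := delta_lip X HX A a0 y x.
    rewrite (dist_sym X HX y x). move=> H1 H2. apply Rabs_le. lra. }
  have Hvl : forall i x y, Rabs (v x i - v y i) <= (lam + 1) * dist x y + s.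
  { move=> i x y. have [_ [H _]] := HF i. have := H x y. have := dist_ge0 X HX x y.
    rewrite /v. case: (_ == _) => H0 H1.
    - have := Rmax0_lip (F i x) (F i y). have := Hdl x y. move=> H2 H3.
      have := Rabs_triang' (Rmax (F i x) 0 - Rmax (F i y) 0) (delta X A x - delta X A y).
      have -> : Rmax (F i x) 0 - Rmax (F i y) 0 + (delta X A x - delta X A y) =
                Rmax (F i x) 0 + delta X A x - (Rmax (F i y) 0 + delta X A y) by ring.
      lra.
    - lra. }
  have Hvc : forall i, rcont (fun x => v x i).
  { move=> i x e He. have [Hci _] := HF i.
    case: (Hci x (e/2)) => [|d1 [Hd1 H1]]; first lra.
    exists (Rmin d1 (e/2)). split; first by apply Rmin_pos; lra.
    move=> y Hy. have Hy1 := Rlt_le_trans _ _ _ Hy (Rmin_l _ _).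
    have Hy2 := Rlt_le_trans _ _ _ Hy (Rmin_r _ _).
    have H2 := H1 y Hy1. rewrite /v. case: (_ == _); last by lra.
    have := Rmax0_lip (F i x) (F i y). have := Hdl x y. move=> H3 H4.
    have := Rabs_triang' (Rmax (F i x) 0 - Rmax (F i y) 0) (delta X A x - delta X A y).
    have -> : Rmax (F i x) 0 - Rmax (F i y) 0 + (delta X A x - delta X A y) =
              Rmax (F i x) 0 + delta X A x - (Rmax (F i y) 0 + delta X A y) by ring.
    lra. }
  have Hext : forall a, psi (proj1_sig a) = phi a.
  { move=> a. apply hs_eq => i. rewrite Hpsi /v.
    have [_ [_ H]] := HF i. rewrite H /f.
    case: eqP => Hi //.
    rewrite (delta_A X HX A a) Rmax_left; first ring.
    have := proj2_sig (phi a) i Hi. rewrite /crd. lra. }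
  pose Lc := Kn n * (lam + 1). pose Ls := Kn n * s.
  have HLc : 0 <= Lc by apply Rmult_le_pos; [exact: Kn_ge0| lra].
  have HLs : 0 <= Ls by apply Rmult_le_pos; [exact: Kn_ge0| lra].
  have Hpl : forall x y, dist (psi x) (psi y) <= Lc * dist x y + Ls.
  { move=> x y. have := vec_lip n X psi (fun i x => v x i) (lam + 1) s Hpsi Hvl x y.
    rewrite /Lc /Ls. lra. }
  have [il Hil] := last_idx n hn.
  have Hdel : forall x, delta X A x <= dist (origin n) (psi x).
  { move=> x. have := origin_coord n (psi x) il. rewrite Hpsi /v Hil eqxx.
    have := Rmax_r (F il x) 0. have := delta_ge0 X HX A a0 x.
    move=> H1 H2. rewrite Rabs_right; lra. }
  have Hnear : forall x, exists a : {y : pt X | A y}, dist x (proj1_sig a) < delta X A x + 1.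
  { move=> x. apply (delta_approx X HX A a0 x 1). lra. }
  have Hkey : forall x (a : {y : pt X | A y}), dist x (proj1_sig a) < delta X A x + 1 ->
      dist (origin n) (phi a) <= dist (origin n) (psi x) + Lc * (delta X A x + 1) + Ls.
  { move=> x a Ha. rewrite -Hext.
    have := dist_tri _ HY (origin n) (psi x) (psi (proj1_sig a)).
    have := Hpl x (proj1_sig a).
    have : Lc * dist x (proj1_sig a) <= Lc * (delta X A x + 1) by apply Rmult_le_compat_l; lra.
    lra. }
  exists psi. split; [split; [|split]|split] => //.
  - exact: (vec_cont n X HX psi (fun i x => v x i) Hpsi Hvc).
  - apply (proper_of_coercive X (halfspace n) HX HPX HY psi (proj1_sig a0) (origin n)).
    + exact: (vec_cont n X HX psi (fun i x => v x i) Hpsi Hvc).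
    + move=> M. pose M' := M + Lc * (M + 1) + Ls.
      have HK := Hp (closed_ball (origin n) M') (hs_proper n _ _).
      case: (compact_bounded _ (sub_metric X HX A) _ a0 HK) => R' HR'.
      exists (R' + M + 1) => x Hx.
      have Hd := Hdel x.
      case: (Hnear x) => a Ha.
      have H1 := Hkey x a Ha.
      have : Lc * (delta X A x + 1) <= Lc * (M + 1) by apply Rmult_le_compat_l; lra.
      move=> H2.
      have H3 : dist (proj1_sig a0) (proj1_sig a) <= R'.
      { apply (HR' a). rewrite /closed_ball /M'. lra. }
      have := dist_tri X HX (proj1_sig a0) (proj1_sig a) x.
      rewrite (dist_sym X HX (proj1_sig a) x). lra.
  - exists Lc; exists Ls; split; [exact HLc| split; [exact HLs| exact Hpl]].
  - move=> Hnz x0 y0.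
    case: (Hnz a0 (origin n)) => c [b [Hc0 [Hb0 Hcb]]].
    have Hmu : 0 < c / (1 + Lc) by apply div_pos; lra.
    have Hmu' := divK c (1 + Lc) ltac:(lra).
    set mu := c / (1 + Lc) in Hmu Hmu'.
    have Hc' : 0 < Rmin 1 mu / 2 by have := Rmin_pos 1 mu ltac:(lra) Hmu; lra.
    have Hc'1 : Rmin 1 mu / 2 <= 1 / 2 by have := Rmin_l 1 mu; lra.
    have Hc'2 : Rmin 1 mu / 2 <= mu / 2 by have := Rmin_r 1 mu; lra.
    set c' := Rmin 1 mu / 2 in Hc' Hc'1 Hc'2.
    have Hbeta : 0 <= (b + Lc + Ls) / (1 + Lc) by apply div_ge0; lra.
    have Hbeta' := divK (b + Lc + Ls) (1 + Lc) ltac:(lra).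
    set beta0 := (b + Lc + Ls) / (1 + Lc) in Hbeta Hbeta'.
    have HD0 : 0 <= dist (proj1_sig a0) x0 := dist_ge0 X HX _ _.
    have HyO : 0 <= dist y0 (origin n) := dist_ge0 _ HY _ _.
    exists c'. exists (beta0 / 2 + c' * (1 + dist (proj1_sig a0) x0) + dist y0 (origin n)).
    split => //. split.
    { have : 0 <= c' * (1 + dist (proj1_sig a0) x0) by apply Rmult_le_pos; lra. lra. }
    move=> x.
    case: (Hnear x) => a Ha.
    have HN1 : delta X A x <= dist (origin n) (psi x) := Hdel x.
    have Hd0 : 0 <= delta X A x := delta_ge0 X HX A a0 x.
    have Hda : 0 <= dist (proj1_sig a) (proj1_sig a0) := dist_ge0 X HX _ _.
    have HN2 : c * dist (proj1_sig a) (proj1_sig a0) - b <=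
               dist (origin n) (psi x) + Lc * (delta X A x + 1) + Ls.
    { have := Hcb a. have := Hkey x a Ha. rewrite (dist_sym _ HY (origin n) (phi a)). simpl. lra. }
    set N := dist (origin n) (psi x) in HN1 HN2 *.
    have HN3 : mu * dist (proj1_sig a) (proj1_sig a0) - beta0 <= N.
    { have : Lc * delta X A x <= Lc * N by apply Rmult_le_compat_l.
      move=> H.
      have H2 : (mu * dist (proj1_sig a) (proj1_sig a0) - beta0) * (1 + Lc) <= N * (1 + Lc).
      { have -> : (mu * dist (proj1_sig a) (proj1_sig a0) - beta0) * (1 + Lc) =
                  mu * (1 + Lc) * dist (proj1_sig a) (proj1_sig a0) - beta0 * (1 + Lc) by ring.
        rewrite Hmu' Hbeta'. lra. }
      apply (Rmult_le_reg_r (1 + Lc)); lra. }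
    have HN4 : c' * (delta X A x + dist (proj1_sig a) (proj1_sig a0)) <= N + beta0 / 2.
    { have : c' * delta X A x <= 1 / 2 * delta X A x by apply Rmult_le_compat_r.
      have : c' * dist (proj1_sig a) (proj1_sig a0) <= mu / 2 * dist (proj1_sig a) (proj1_sig a0)
        by apply Rmult_le_compat_r.
      lra. }
    have Hxx0 : dist x x0 <= delta X A x + 1 + dist (proj1_sig a) (proj1_sig a0) + dist (proj1_sig a0) x0.
    { have := dist_tri X HX x (proj1_sig a) x0.
      have := dist_tri X HX (proj1_sig a) (proj1_sig a0) x0. lra. }
    have HN5 : c' * dist x x0 <= c' * (delta X A x + dist (proj1_sig a) (proj1_sig a0)) +
                                 c' * (1 + dist (proj1_sig a0) x0).
    { rewrite -Rmult_plus_distr_l. apply Rmult_le_compat_l; lra. }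
    have HN6 : N <= dist (psi x) y0 + dist y0 (origin n).
    { rewrite /N (dist_sym _ HY (origin n) (psi x)). exact: dist_tri. }
    apply Rle_ge. lra.
Qed.
Lemma rcont_lip1 (X : MSpace) (g : pt X -> R) :
  (forall x y, Rabs (g x - g y) <= dist x y) -> rcont g.
Proof.
  move=> H x e He. exists e. split => // y Hy. have := H x y. lra.
Qed.

Lemma ext_empty (n : nat) (hn : (1 <= n)%N) (X : MSpace) (HXo : is_object X) :
  exists psi : pt X -> pt (halfspace n), morA psi /\ nonzero_norm psi.
Proof.
  case: HXo => HX HPX. have HY := hs_metric n.
  case: (classic (exists x0 : pt X, True)) => [[x0 _]|HXe].
  - pose w x (i : 'I_n) := if nat_of_ord i == n.-1 then dist x0 x else 0.
    have Hw : forall x (i : 'I_n), nat_of_ord i = n.-1 -> 0 <= w x i.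
    { move=> x i Hi. rewrite /w Hi eqxx. exact: dist_ge0. }
    pose psi x : pt (halfspace n) :=
      exist (fun v : 'I_n -> R => forall i : 'I_n, nat_of_ord i = n.-1 -> 0 <= v i) (w x) (Hw x).
    have Hpsi : forall x i, crd (psi x) i = w x i by [].
    have Hwl : forall i x y, Rabs (w x i - w y i) <= 1 * dist x y + 0.
    { move=> i x y. rewrite /w. case: (_ == _).
      - have := dist_tri X HX x0 x y. have := dist_tri X HX x0 y x.
        rewrite (dist_sym X HX y x). move=> H1 H2. apply Rabs_le. lra.
      - have -> : 0 - 0 = 0 by ring. rewrite Rabs_R0. have := dist_ge0 X HX x y. lra. }
    have Hwc : forall i, rcont (fun x => w x i).
    { move=> i. apply rcont_lip1 => x y. have := Hwl i x y. lra. }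
    have [il Hil] := last_idx n hn.
    have Hco : forall x, dist x0 x <= dist (origin n) (psi x).
    { move=> x. have := origin_coord n (psi x) il. rewrite Hpsi /w Hil eqxx.
      rewrite Rabs_right //. apply Rle_ge; exact: dist_ge0. }
    have Hcont := vec_cont n X HX psi (fun i x => w x i) Hpsi Hwc.
    exists psi. split; [split; [|split]|].
    + exact: Hcont.
    + apply (proper_of_coercive X (halfspace n) HX HPX HY psi x0 (origin n)) => //.
      move=> M. exists M => x Hx. have := Hco x. lra.
    + exists (Kn n * 1), 0. split; first by have := Kn_ge0 n; lra. split; first lra.
      move=> x y. have := vec_lip n X psi (fun i x => w x i) 1 0 Hpsi Hwl x y. lra.
    + move=> x1 y0. exists 1, (dist x0 x1 + dist y0 (origin n)).
      split; first lra. split.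
      { have := dist_ge0 X HX x0 x1. have := dist_ge0 _ HY y0 (origin n). lra. }
      move=> x. have H3 := Hco x. have H2 := dist_tri X HX x x0 x1.
      have H1 := dist_tri _ HY (origin n) y0 (psi x).
      rewrite (dist_sym _ HY (origin n) y0) (dist_sym _ HY y0 (psi x)) in H1.
      rewrite (dist_sym X HX x0 x) in H3.
      apply Rle_ge. lra.
  - have Hno : forall x : pt X, False by move=> x; apply HXe; by exists x.
    exists (fun _ => origin n). split; [split; [|split]|].
    + move=> x. exfalso; exact: Hno x.
    + move=> K _ I U _ _. exists nil => x. exfalso; exact: Hno x.
    + exists 0, 0. split; first lra. split; first lra. move=> x. exfalso; exact: Hno x.
    + move=> x0. exfalso; exact: Hno x0.
Qed.

Theorem theorem4p3 (n : nat) (hn : (1 <= n)%N) :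
  is_object (halfspace n) /\ AE_A (halfspace n) /\ AE_At (halfspace n).
Proof.
  split; first exact: hs_object. split.
  - move=> X HXo A HA phi Hphi.
    case: (classic (exists a : {y : pt X | A y}, True)) => [[a0 _]|HnA].
    + case: (ext_main n hn X HXo A HA phi Hphi a0) => psi [H1 [H2 _]].
      by exists psi.
    + case: (ext_empty n hn X HXo) => psi [H1 _]. exists psi. split => // a.
      exfalso. apply HnA. by exists a.
  - move=> X HXo A HA phi [Hphi Hnz].
    case: (classic (exists a : {y : pt X | A y}, True)) => [[a0 _]|HnA].
    + case: (ext_main n hn X HXo A HA phi Hphi a0) => psi [H1 [H2 H3]].
      exists psi. split => //. split => //. exact: H3.
    + case: (ext_empty n hn X HXo) => psi [H1 H2]. exists psi. split => //.
      move=> a. exfalso. apply HnA. by exists a.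
Qed.
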